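(* For all configurations $C$ of the CK machine: if $C \to C'$, then $[\![C]\!] \xrightarrow{\tau} [\![C']\!]$; and if $[\![C]\!] \xrightarrow{\tau} P$, then there exists a configuration $C'$ such that $P = [\![C']\!]$.
   Context: HOcore processes: $P,Q ::= a(x).P \mid \overline{a}\langle P\rangle \mid P \parallel Q \mid x \mid 0$ ($a$ channel names, $x$ process variables, $a(x).P$ binds $x$, $\parallel$ associative and commutative with unit $0$). $\tau$-transitions: $\overline{a}\langle P\rangle \parallel a(x).Q \parallel R \xrightarrow{\tau} Q\{P/x\} \parallel R$ (communication between an output and an input on the same name in parallel; up to associativity/commutativity of $\parallel$, with inputs/outputs under input prefixes or inside messages unable to act). CK machine: values $v ::= x \mid \lambda x.t$; terms $t,s ::= v \mid t\,s$; stacks $\pi ::= [\mathrm{arg}\ t]::\pi \mid [\mathrm{fun}\ v]::\pi \mid []$; configurations $C ::= \langle t, \pi\rangle_{\mathrm{ev}} \mid \langle \pi, v\rangle_{\mathrm{cont}}$. Transitions: $\langle t\,s, \pi\rangle_{\mathrm{ev}} \to \langle t, [\mathrm{arg}\ s]::\pi\rangle_{\mathrm{ev}}$; $\langle v,\pi\rangle_{\mathrm{ev}}\to\langle\pi,v\rangle_{\mathrm{cont}}$; $\langle [\mathrm{arg}\ t]::\pi, v\rangle_{\mathrm{cont}} \to \langle t, [\mathrm{fun}\ v]::\pi\rangle_{\mathrm{ev}}$; $\langle [\mathrm{fun}\ \lambda x.t]::\pi, v\rangle_{\mathrm{cont}}\to\langle t\{v/x\},\pi\rangle_{\mathrm{ev}}$.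 Translation (channel names $c$, $val$, $b$; $p$ fresh): $[\![\langle t,\pi\rangle_{\mathrm{ev}}]\!] = [\![t]\!] \parallel \overline{c}\langle[\![\pi]\!]\rangle$; $[\![\langle\pi, v\rangle_{\mathrm{cont}}]\!] = [\![\pi]\!] \parallel \overline{val}\langle [\![v]\!]_v\rangle$; $[\![[]]\!] = \overline{b}\langle 0\rangle$; $[\![[\mathrm{arg}\ t]::\pi]\!] = \mathrm{Arg}([\![t]\!],[\![\pi]\!])$; $[\![[\mathrm{fun}\ v]::\pi]\!] = \mathrm{Fun}([\![v]\!]_v,[\![\pi]\!])$; $\mathrm{Arg}(P_t,P_\pi) = val(x).(P_t \parallel \overline{c}\langle \mathrm{Fun}(x, P_\pi)\rangle)$; $\mathrm{Fun}(P_v,P_\pi) = P_v \parallel \overline{c}\langle P_\pi\rangle$; $[\![x]\!]_v = x$; $[\![\lambda x.t]\!]_v = val(x).[\![t]\!]$; $[\![v]\!] = c(p).(p \parallel \overline{val}\langle[\![v]\!]_v\rangle)$; $[\![t\,s]\!] = c(p).([\![t]\!] \parallel \overline{c}\langle\mathrm{Arg}([\![s]\!], p)\rangle)$. *)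

(* Defs.v *)
(* De Bruijn representation of both HOcore processes and
   lambda-terms (alpha-equivalence and freshness handled by indices). *)
From Stdlib Require Import Arith List.
Import ListNotations.

Definition chan := nat.

Inductive proc : Type :=
| PIn  (a : chan) (P : proc)      (* a(x).P, x = index 0 in P *)
| POut (a : chan) (P : proc)
| PPar (P Q : proc)
| PVar (n : nat)
| PNil.

Fixpoint plift (k : nat) (P : proc) : proc :=
  match P with
  | PIn a Q => PIn a (plift (S k) Q)
  | POut a Q => POut a (plift k Q)
  | PPar Q R => PPar (plift k Q) (plift k R)
  | PVar n => if Nat.ltb n k then PVar n else PVar (S n)
  | PNil => PNil
  end.

Definition plift_by (k : nat) (P : proc) : proc := Nat.iter k (plift 0) P.

(* capture-avoiding substitution of N for variable k in P (variables above k
   are decremented, since the binder of k disappears) *)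
Fixpoint psubst (k : nat) (N : proc) (P : proc) : proc :=
  match P with
  | PIn a Q => PIn a (psubst (S k) N Q)
  | POut a Q => POut a (psubst k N Q)
  | PPar Q R => PPar (psubst k N Q) (psubst k N R)
  | PVar n => if Nat.ltb n k then PVar n
              else if Nat.eqb n k then plift_by k N
              else PVar (pred n)
  | PNil => PNil
  end.

(* Q{P/x} where Q is the body of a(x).Q *)
Definition psubst0 (Q P : proc) : proc := psubst 0 P Q.

Inductive scong : proc -> proc -> Prop :=
| sc_refl P : scong P P
| sc_sym P Q : scong P Q -> scong Q P
| sc_trans P Q R : scong P Q -> scong Q R -> scong P R
| sc_assoc P Q R : scong (PPar P (PPar Q R)) (PPar (PPar P Q) R)
| sc_comm P Q : scong (PPar P Q) (PPar Q P)
| sc_nil P : scong (PPar P PNil) P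
| sc_in a P Q : scong P Q -> scong (PIn a P) (PIn a Q)
| sc_out a P Q : scong P Q -> scong (POut a P) (POut a Q)
| sc_par P P' Q Q' : scong P P' -> scong Q Q' -> scong (PPar P Q) (PPar P' Q').

Definition tau (P P' : proc) : Prop :=
  exists (a : chan) (P1 Q R : proc),
    scong P (PPar (POut a P1) (PPar (PIn a Q) R)) /\
    scong P' (PPar (psubst0 Q P1) R).

Inductive value : Type :=
| VVar (n : nat)
| VLam (t : term)                 (* lambda x. t, x = index 0 in t *)
with term : Type :=
| TVal (v : value)
| TApp (t s : term).

Fixpoint vlift (k : nat) (v : value) : value :=
  match v with
  | VVar n => if Nat.ltb n k then VVar n else VVar (S n)
  | VLam t => VLam (tlift (S k) t)
  end
with tlift (k : nat) (t : term) : term :=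
  match t with
  | TVal v => TVal (vlift k v)
  | TApp t1 t2 => TApp (tlift k t1) (tlift k t2)
  end.

Definition vlift_by (k : nat) (v : value) : value := Nat.iter k (vlift 0) v.

Fixpoint vsubst (k : nat) (w : value) (v : value) : value :=
  match v with
  | VVar n => if Nat.ltb n k then VVar n
              else if Nat.eqb n k then vlift_by k w
              else VVar (pred n)
  | VLam t => VLam (tsubst (S k) w t)
  end
with tsubst (k : nat) (w : value) (t : term) : term :=
  match t with
  | TVal v => TVal (vsubst k w v)
  | TApp t1 t2 => TApp (tsubst k w t1) (tsubst k w t2)
  end.

(* t{v/x} where t is the body of lambda x. t *)
Definition tsubst0 (t : term) (v : value) : term := tsubst 0 v t.

Inductive frame : Type :=
| FArg (t : term)
| FFun (v : value).

Definition stack := list frame.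

Inductive config : Type :=
| Ev (t : term) (pi : stack)
| Cont (pi : stack) (v : value).

Inductive ck_step : config -> config -> Prop :=
| ck_app t s pi : ck_step (Ev (TApp t s) pi) (Ev t (FArg s :: pi))
| ck_val v pi : ck_step (Ev (TVal v) pi) (Cont pi v)
| ck_arg t pi v : ck_step (Cont (FArg t :: pi) v) (Ev t (FFun v :: pi))
| ck_beta t pi v : ck_step (Cont (FFun (VLam t) :: pi) v) (Ev (tsubst0 t v) pi).

Definition ch_c : chan := 0.
Definition ch_val : chan := 1.
Definition ch_b : chan := 2.

Definition Fun (Pv Ppi : proc) : proc := PPar Pv (POut ch_c Ppi).

(* Arg(P_t, P_pi) = val(x).(P_t || c<Fun(x, P_pi)>), x fresh *)
Definition Arg (Pt Ppi : proc) : proc :=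
  PIn ch_val (PPar (plift 0 Pt) (POut ch_c (Fun (PVar 0) (plift 0 Ppi)))).

Fixpoint tr_val (v : value) : proc :=
  match v with
  | VVar n => PVar n
  | VLam t => PIn ch_val (tr_term t)
  end
with tr_term (t : term) : proc :=
  match t with
  (* [[v]] = c(p).(p || val<[[v]]_v>), p fresh *)
  | TVal v => PIn ch_c (PPar (PVar 0) (POut ch_val (plift 0 (tr_val v))))
  (* [[t s]] = c(p).([[t]] || c<Arg([[s]], p)>), p fresh *)
  | TApp t1 t2 =>
      PIn ch_c (PPar (plift 0 (tr_term t1))
                     (POut ch_c (Arg (plift 0 (tr_term t2)) (PVar 0))))
  end.

Fixpoint tr_stack (pi : stack) : proc :=
  match pi with
  | [] => POut ch_b PNil
  | FArg t :: pi' => Arg (tr_term t) (tr_stack pi')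
  | FFun v :: pi' => Fun (tr_val v) (tr_stack pi')
  end.

Definition tr_config (C : config) : proc :=
  match C with
  | Ev t pi => PPar (tr_term t) (POut ch_c (tr_stack pi))
  | Cont pi v => PPar (tr_stack pi) (POut ch_val (tr_val v))
  end.

(* Main.v *)
Require Import Defs.
From Stdlib Require Import Arith List Permutation Lia.
Import ListNotations.

Lemma plift_plift : forall P i j, i <= j -> plift (S j) (plift i P) = plift i (plift j P).
Proof.
  induction P; intros i j H; simpl.
  - rewrite IHP by lia; reflexivity.
  - rewrite IHP by lia; reflexivity.
  - rewrite IHP1, IHP2 by lia; reflexivity.
  - destruct (Nat.ltb_spec n i); destruct (Nat.ltb_spec n j); simpl;
      repeat (match goal with |- context [Nat.ltb ?a ?b] => destruct (Nat.ltb_spec a b) end);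
      try reflexivity; lia.
  - reflexivity.
Qed.

Lemma plift_plift_by : forall k N j, j <= k -> plift j (plift_by k N) = plift 0 (plift_by k N).
Proof.
  induction k; intros N j H.
  - assert (j = 0) by lia; subst; reflexivity.
  - unfold plift_by; simpl. fold (plift_by k N).
    destruct j. reflexivity.
    rewrite plift_plift by lia. rewrite IHk by lia. reflexivity.
Qed.

Lemma psubst_plift : forall P N k j, j <= k ->
  psubst (S k) N (plift j P) = plift j (psubst k N P).
Proof.
  induction P; intros N k j H; simpl.
  - rewrite IHP by lia; reflexivity.
  - rewrite IHP by lia; reflexivity.
  - rewrite IHP1, IHP2 by lia; reflexivity.
  - destruct (Nat.ltb_spec n j); simpl.
    + destruct (Nat.ltb_spec n (S k)); destruct (Nat.ltb_spec n k); try lia; simpl.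
      destruct (Nat.ltb_spec n j); try lia; reflexivity.
    + destruct (Nat.ltb_spec (S n) (S k)); destruct (Nat.ltb_spec n k); try lia; simpl.
      * destruct (Nat.ltb_spec n j); try lia; reflexivity.
      * destruct (Nat.eqb_spec (S n) (S k)); destruct (Nat.eqb_spec n k); try lia.
        -- subst. unfold plift_by at 1; simpl. fold (plift_by k N). idtac.
           symmetry; apply plift_plift_by; lia.
        -- simpl. destruct n; [lia|]. simpl.
           destruct (Nat.ltb_spec n j); try lia; reflexivity.
  - reflexivity.
Qed.

Lemma psubst_plift_same : forall P N k, psubst k N (plift k P) = P.
Proof.
  induction P; intros N k; simpl.
  - rewrite IHP; reflexivity.
  - rewrite IHP; reflexivity.
  - rewrite IHP1, IHP2; reflexivity.
  - destruct (Nat.ltb_spec n k); simpl.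
    + destruct (Nat.ltb_spec n k); try lia; reflexivity.
    + destruct (Nat.ltb_spec (S n) k); try lia.
      destruct k; simpl; [reflexivity|]; destruct (Nat.eqb_spec n k); [lia|reflexivity].
  - reflexivity.
Qed.

Scheme value_ind2 := Induction for value Sort Prop
  with term_ind2 := Induction for term Sort Prop.
Combined Scheme vt_ind from value_ind2, term_ind2.

Lemma tr_lift :
  (forall v k, tr_val (vlift k v) = plift k (tr_val v)) /\
  (forall t k, tr_term (tlift k t) = plift k (tr_term t)).
Proof.
  apply vt_ind; intros; simpl.
  - destruct (Nat.ltb n k); reflexivity.
  - rewrite H; reflexivity.
  - rewrite H. rewrite plift_plift by lia. reflexivity.
  - unfold Arg, Fun; simpl. rewrite H, H0. rewrite !plift_plift by lia. reflexivity.
Qed.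

Lemma tr_lift_by : forall k w, tr_val (vlift_by k w) = plift_by k (tr_val w).
Proof.
  induction k; intros w. reflexivity.
  unfold vlift_by, plift_by; simpl. fold (vlift_by k w). fold (plift_by k (tr_val w)).
  rewrite (proj1 tr_lift), IHk. reflexivity.
Qed.

Lemma tr_subst :
  (forall v k w, tr_val (vsubst k w v) = psubst k (tr_val w) (tr_val v)) /\
  (forall t k w, tr_term (tsubst k w t) = psubst k (tr_val w) (tr_term t)).
Proof.
  apply vt_ind; intros; simpl.
  - destruct (Nat.ltb n k); [reflexivity|].
    destruct (Nat.eqb n k); [apply tr_lift_by|reflexivity].
  - rewrite H; reflexivity.
  - rewrite H. rewrite psubst_plift by lia. reflexivity.
  - unfold Arg, Fun; simpl. rewrite H, H0. rewrite !psubst_plift by lia. reflexivity.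
Qed.

Lemma plift_scong : forall P Q, scong P Q -> forall k, scong (plift k P) (plift k Q).
Proof.
  induction 1; intros k; simpl.
  - apply sc_refl.
  - apply sc_sym; auto.
  - eapply sc_trans; eauto.
  - apply sc_assoc.
  - apply sc_comm.
  - apply sc_nil.
  - apply sc_in; auto.
  - apply sc_out; auto.
  - apply sc_par; auto.
Qed.

Lemma plift_by_scong : forall k P Q, scong P Q -> scong (plift_by k P) (plift_by k Q).
Proof.
  induction k; intros; [assumption|].
  unfold plift_by; simpl. apply plift_scong. apply IHk; auto.
Qed.

Lemma psubst_scong_P : forall P Q, scong P Q -> forall k N, scong (psubst k N P) (psubst k N Q).
Proof.
  induction 1; intros k N; simpl.
  - apply sc_refl.
  - apply sc_sym; auto.
  - eapply sc_trans; eauto.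
  - apply sc_assoc.
  - apply sc_comm.
  - apply sc_nil.
  - apply sc_in; auto.
  - apply sc_out; auto.
  - apply sc_par; auto.
Qed.

Lemma psubst_scong_N : forall P k N N', scong N N' -> scong (psubst k N P) (psubst k N' P).
Proof.
  induction P; intros k N N' H; simpl.
  - apply sc_in; auto.
  - apply sc_out; auto.
  - apply sc_par; auto.
  - destruct (Nat.ltb n k). apply sc_refl.
    destruct (Nat.eqb n k). apply plift_by_scong; auto. apply sc_refl.
  - apply sc_refl.
Qed.

Fixpoint flat (P : proc) : list proc :=
  match P with
  | PPar P Q => flat P ++ flat Q
  | PNil => []
  | _ => [P]
  end.

Fixpoint fold (l : list proc) : proc :=
  match l with
  | [] => PNil
  | x :: l => PPar x (fold l)
  end.

Inductive ceq : proc -> proc -> Prop :=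
| ceq_refl P : ceq P P
| ceq_in a X Y : scong X Y -> ceq (PIn a X) (PIn a Y)
| ceq_out a X Y : scong X Y -> ceq (POut a X) (POut a Y).

Lemma ceq_sym : forall P Q, ceq P Q -> ceq Q P.
Proof. destruct 1; constructor; apply sc_sym; auto. Qed.

Lemma ceq_trans : forall P Q R, ceq P Q -> ceq Q R -> ceq P R.
Proof.
  intros P Q R H1 H2; destruct H1; inversion H2; subst; try constructor; auto;
    eapply sc_trans; eauto.
Qed.

Lemma ceq_scong : forall P Q, ceq P Q -> scong P Q.
Proof. destruct 1; [apply sc_refl|apply sc_in|apply sc_out]; auto. Qed.

Lemma F2_refl : forall l, Forall2 ceq l l.
Proof. induction l; constructor; auto; constructor. Qed.

Lemma F2_sym : forall l l', Forall2 ceq l l' -> Forall2 ceq l' l.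
Proof. induction 1; constructor; auto; apply ceq_sym; auto. Qed.

Lemma F2_trans : forall l1 l2, Forall2 ceq l1 l2 -> forall l3, Forall2 ceq l2 l3 -> Forall2 ceq l1 l3.
Proof.
  induction 1; intros l3 H3; inversion H3; subst; constructor; eauto using ceq_trans.
Qed.

Definition D P Q := exists l, Permutation (flat P) l /\ Forall2 ceq l (flat Q).

Lemma D_sym : forall P Q, D P Q -> D Q P.
Proof.
  intros P Q [l [Hp Hf]].
  destruct (Permutation_Forall2 (Permutation_sym Hp) Hf) as [l' [Hp' Hf']].
  exists l'. split; auto. apply F2_sym; auto.
Qed.

Lemma D_trans : forall P Q R, D P Q -> D Q R -> D P R.
Proof.
  intros P Q R [l1 [Hp1 Hf1]] [l2 [Hp2 Hf2]].
  destruct (Permutation_Forall2 Hp2 (F2_sym _ _ Hf1)) as [l1' [Hp' Hf']].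
  exists l1'. split. eapply Permutation_trans; eauto.
  eapply F2_trans; [apply F2_sym; exact Hf'| exact Hf2].
Qed.

Lemma scong_D : forall P Q, scong P Q -> D P Q.
Proof.
  induction 1.
  - exists (flat P); split; [apply Permutation_refl|apply F2_refl].
  - apply D_sym; auto.
  - eapply D_trans; eauto.
  - exists (flat (PPar (PPar P Q) R)); split; [|apply F2_refl].
    simpl. rewrite app_assoc. apply Permutation_refl.
  - exists (flat (PPar Q P)); split; [|apply F2_refl].
    simpl. apply Permutation_app_comm.
  - exists (flat P); split; [|apply F2_refl]. simpl. rewrite app_nil_r. apply Permutation_refl.
  - exists [PIn a P]; split; [apply Permutation_refl|]. simpl. constructor; [|constructor].
    constructor; auto.
  - exists [POut a P]; split; [apply Permutation_refl|]. simpl. constructor; [|constructor].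
    constructor; auto.
  - destruct IHscong1 as [l1 [Hp1 Hf1]], IHscong2 as [l2 [Hp2 Hf2]].
    exists (l1 ++ l2); split; simpl.
    + apply Permutation_app; auto.
    + apply Forall2_app; auto.
Qed.

Lemma fold_app : forall l1 l2, scong (fold (l1 ++ l2)) (PPar (fold l1) (fold l2)).
Proof.
  induction l1; intros l2; simpl.
  - eapply sc_trans; [apply sc_sym, sc_nil| apply sc_comm].
  - eapply sc_trans; [apply sc_par; [apply sc_refl| apply IHl1]|apply sc_assoc].
Qed.

Lemma fold_flat : forall P, scong P (fold (flat P)).
Proof.
  induction P; simpl; try (apply sc_sym, sc_nil).
  - eapply sc_trans; [apply sc_par; eauto| apply sc_sym, fold_app].
  - apply sc_refl.
Qed.

Lemma perm_fold : forall l l', Permutation l l' -> scong (fold l) (fold l').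
Proof.
  induction 1; simpl.
  - apply sc_refl.
  - apply sc_par; auto; apply sc_refl.
  - eapply sc_trans; [apply sc_assoc|].
    eapply sc_trans; [apply sc_par; [apply sc_comm|apply sc_refl]|].
    apply sc_sym, sc_assoc.
  - eapply sc_trans; eauto.
Qed.

Lemma F2_fold : forall l l', Forall2 ceq l l' -> scong (fold l) (fold l').
Proof.
  induction 1; simpl. apply sc_refl. apply sc_par; auto. apply ceq_scong; auto.
Qed.

Lemma F_val : forall V X,
  psubst0 (PPar (PVar 0) (POut ch_val (plift 0 V))) X = PPar X (POut ch_val V).
Proof. intros; unfold psubst0; simpl. rewrite psubst_plift_same. reflexivity. Qed.

Lemma F_app : forall T S X,
  psubst0 (PPar (plift 0 T) (POut ch_c (Arg (plift 0 S) (PVar 0)))) X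
  = PPar T (POut ch_c (Arg S X)).
Proof.
  intros; unfold psubst0, Arg, Fun; simpl.
  rewrite psubst_plift by lia. rewrite !psubst_plift_same. reflexivity.
Qed.

Lemma F_arg : forall T Pi V,
  psubst0 (PPar (plift 0 T) (POut ch_c (Fun (PVar 0) (plift 0 Pi)))) V
  = PPar T (POut ch_c (Fun V Pi)).
Proof.
  intros; unfold psubst0, Fun; simpl. rewrite !psubst_plift_same. reflexivity.
Qed.

Lemma F_beta : forall t v, psubst0 (tr_term t) (tr_val v) = tr_term (tsubst0 t v).
Proof. intros; unfold psubst0, tsubst0. rewrite (proj2 tr_subst). reflexivity. Qed.

Lemma swap2 : forall A B, scong (PPar A B) (PPar B (PPar A PNil)).
Proof.
  intros. eapply sc_trans; [apply sc_comm|]. apply sc_par; [apply sc_refl|apply sc_sym, sc_nil].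
Qed.

Lemma perm3 : forall (x y p z : proc) l', Permutation [y; p; x] (x :: y :: l') -> l' = [p].
Proof.
  intros x y p z l' H.
  pose proof (Permutation_length H) as L. simpl in L.
  destruct l' as [|w [|]]; simpl in L; try lia.
  f_equal. symmetry. apply Permutation_length_1.
  apply (Permutation_cons_inv (a := y)). apply (Permutation_cons_inv (a := x)).
  eapply Permutation_trans; [|exact H].
  eapply Permutation_trans; [apply perm_swap|]. apply perm_skip. apply perm_swap.
Qed.

Lemma ceq_out_inv : forall x a P1, ceq x (POut a P1) -> exists X, x = POut a X /\ scong X P1.
Proof. intros x a P1 H; inversion H; subst; eexists; split; eauto; apply sc_refl. Qed.

Lemma ceq_in_inv : forall x a P1, ceq x (PIn a P1) -> exists X, x = PIn a X /\ scong X P1.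
Proof. intros x a P1 H; inversion H; subst; eexists; split; eauto; apply sc_refl. Qed.

Theorem theorem6p1 :
  forall C : config,
    (forall C' : config, ck_step C C' -> tau (tr_config C) (tr_config C')) /\
    (forall P : proc, tau (tr_config C) P ->
       exists C' : config, scong P (tr_config C')).
Proof.
  intros C; split.
  - intros C' Hs; destruct Hs; unfold tau; simpl.
    + do 4 eexists; split; [apply swap2|].
      rewrite F_app. apply sc_sym, sc_nil.
    + do 4 eexists; split; [apply swap2|].
      rewrite F_val. apply sc_sym, sc_nil.
    + unfold Arg. do 4 eexists; split; [apply swap2|].
      rewrite F_arg. apply sc_sym, sc_nil.
    + do 4 eexists; split; [apply sc_comm|].
      rewrite F_beta. apply sc_refl.
  - intros P [a [P1 [Q [R [H1 H2]]]]].
    destruct (scong_D _ _ H1) as [l [Hp Hf]].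
    simpl in Hf. inversion Hf as [|x l0 y0 l0' Hx Hf1 E1 E2]; subst.
    inversion Hf1 as [|y l1 y1 l1' Hy Hf2 E3 E4]; subst.
    rename y1 into l1.
    apply ceq_out_inv in Hx as [X [-> HX]].
    apply ceq_in_inv in Hy as [Y [-> HY]].
    assert (HR : scong (fold l1) R).
    { eapply sc_trans; [apply F2_fold; exact Hf2| apply sc_sym, fold_flat]. }
    assert (HP : scong P (PPar (psubst0 Y X) (fold l1))).
    { eapply sc_trans; [exact H2|]. apply sc_par; [|apply sc_sym; exact HR].
      unfold psubst0. eapply sc_trans.
      apply psubst_scong_P; apply sc_sym; exact HY.
      apply psubst_scong_N; apply sc_sym; exact HX. }
    assert (HinX : In (POut a X) (flat (tr_config C))).
    { eapply Permutation_in; [apply Permutation_sym; exact Hp| left; reflexivity]. }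
    assert (HinY : In (PIn a Y) (flat (tr_config C))).
    { eapply Permutation_in; [apply Permutation_sym; exact Hp| right; left; reflexivity]. }
    assert (L := Permutation_length Hp).
    destruct C as [t pi | pi v].
    + destruct t as [v|t s]; simpl in *.
      * destruct HinX as [E|[E|[]]]; inversion E; subst.
        destruct HinY as [E'|[E'|[]]]; inversion E'; subst.
        destruct l1; simpl in L; try lia.
        exists (Cont pi v). eapply sc_trans; [exact HP|].
        rewrite F_val. apply sc_nil.
      * destruct HinX as [E|[E|[]]]; inversion E; subst.
        destruct HinY as [E'|[E'|[]]]; inversion E'; subst.
        destruct l1; simpl in L; try lia.
        exists (Ev t (FArg s :: pi)). eapply sc_trans; [exact HP|].
        rewrite F_app. apply sc_nil.
    + destruct pi as [|[t|w] pi]; simpl in *.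
      * destruct HinY as [E'|[E'|[]]]; inversion E'.
      * destruct HinX as [E|[E|[]]]; inversion E; subst.
        destruct HinY as [E'|[E'|[]]]; inversion E'; subst.
        destruct l1; simpl in L; try lia.
        exists (Ev t (FFun v :: pi)). eapply sc_trans; [exact HP|].
        rewrite F_arg. apply sc_nil.
      * destruct w as [n|t]; simpl in *.
        -- destruct HinY as [E'|[E'|[E'|[]]]]; inversion E'.
        -- destruct HinY as [E'|[E'|[E'|[]]]]; inversion E'; subst.
           destruct HinX as [E|[E|[E|[]]]]; inversion E; subst.
           rewrite (perm3 _ _ _ PNil _ Hp) in HP.
           exists (Ev (tsubst0 t v) pi). eapply sc_trans; [exact HP|].
           simpl. rewrite F_beta. apply sc_par; [apply sc_refl|apply sc_nil].
Qed.
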